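(* Let $p\geq 5$ be a prime and let $r$ be an integer with $1\leq r\leq p-1$ such that $3r+1$ is a quadratic nonresidue modulo $p$. Then for all $n\geq 0$, $d_7(2pn+2r+1)\equiv 0\pmod 4$.
   Context: For each integer $k\geq 1$, the numbers $d_k(n)$ are defined by $\sum_{n\geq 0} d_k(n)q^n = \frac{f_2^k}{f_1^{3k+1}}$, where $f_r = \prod_{i\geq 1}(1-q^{ri})$. *)

(* Defs.v *)
From mathcomp Require Import all_boot all_order all_algebra.
Set Implicit Arguments. Unset Strict Implicit. Unset Printing Implicit Defensive.
Import GRing.Theory.
Local Open Scope ring_scope.

(* d_k(n) = coefficient of q^n in f_2^k / f_1^(3k+1), f_r = prod_{i>=1} (1-q^{ri}).
   Computed exactly via a truncation: only factors with index i <= n matter for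
   the coefficient of q^n, and 1/(1-q^i) = sum_{j>=0} q^{ij} may be truncated to
   j <= n. *)
Definition d (k n : nat) : int :=
  (\prod_(i < n) ((1 - 'X^(2 * i.+1)) ^+ k *
                  (\sum_(j < n.+1) 'X^(i.+1 * j)) ^+ (3 * k + 1)) : {poly int})`_n.

(* Main.v *)
Require Import Defs.
From mathcomp Require Import all_boot all_order all_algebra.
From mathcomp Require Import zify ring.
Set Implicit Arguments. Unset Strict Implicit. Unset Printing Implicit Defensive.
Import Order.TTheory GRing.Theory Num.Theory.

Section Helpers.
Local Open Scope ring_scope.

Definition cong (m : int) (N : nat) (p q : {poly int}) :=
  forall i, (i < N)%N -> (m %| p`_i - q`_i)%Z.

Lemma cong_refl m N p : cong m N p p.
Proof. by move=> i _; rewrite subrr dvdz0. Qed.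

Lemma cong_sym m N p q : cong m N p q -> cong m N q p.
Proof. by move=> h i /h; rewrite -opprB rpredN. Qed.

Lemma cong_trans m N p q r : cong m N p q -> cong m N q r -> cong m N p r.
Proof.
move=> h1 h2 i iN; have := rpredD (h1 i iN) (h2 i iN).
by rewrite addrA subrK.
Qed.

Lemma cong_add m N p1 q1 p2 q2 : cong m N p1 q1 -> cong m N p2 q2 ->
  cong m N (p1 + p2) (q1 + q2).
Proof.
move=> h1 h2 i iN; rewrite !coefD.
have -> : p1`_i + p2`_i - (q1`_i + q2`_i) = (p1`_i - q1`_i) + (p2`_i - q2`_i) by ring.
exact: rpredD (h1 i iN) (h2 i iN).
Qed.

Lemma cong_opp m N p q : cong m N p q -> cong m N (- p) (- q).
Proof.
move=> h i iN; rewrite !coefN.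
have -> : - p`_i - - q`_i = - (p`_i - q`_i) by ring.
by rewrite rpredN h.
Qed.

Lemma cong_sub m N p1 q1 p2 q2 : cong m N p1 q1 -> cong m N p2 q2 ->
  cong m N (p1 - p2) (q1 - q2).
Proof. by move=> h1 h2; apply: cong_add => //; apply: cong_opp. Qed.

Lemma cong_mul m N p1 q1 p2 q2 : cong m N p1 q1 -> cong m N p2 q2 ->
  cong m N (p1 * p2) (q1 * q2).
Proof.
move=> h1 h2 i iN; rewrite !coefM -sumrB; apply: rpred_sum => j _.
have -> : p1`_j * p2`_(i - j) - q1`_j * q2`_(i - j) =
   (p1`_j - q1`_j) * p2`_(i - j) + q1`_j * (p2`_(i - j) - q2`_(i - j)) by ring.
have jN : (j < N)%N by have := ltn_ord j; lia.
have ijN : (i - j < N)%N by lia.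
by apply: rpredD; [apply: dvdz_mulr; apply: h1 | apply: dvdz_mull; apply: h2].
Qed.

Lemma cong_le m N N' p q : (N' <= N)%N -> cong m N p q -> cong m N' p q.
Proof. by move=> le h i iN; apply: h; lia. Qed.

Lemma cong_dvd m m' N p q : (m' %| m)%Z -> cong m N p q -> cong m' N p q.
Proof. by move=> dm h i iN; apply: dvdz_trans dm (h i iN). Qed.

Lemma cong0 m N p q : cong 0 N p q -> cong m N p q.
Proof. by apply: cong_dvd; apply: dvdz0. Qed.

Lemma cong_prod m N (I : Type) (r : seq I) (P : pred I) (F1 F2 : I -> {poly int}) :
  (forall i, P i -> cong m N (F1 i) (F2 i)) ->
  cong m N (\prod_(i <- r | P i) F1 i) (\prod_(i <- r | P i) F2 i).
Proof.
move=> h; apply: (big_ind2 (cong m N)); first exact: cong_refl.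
  by move=> *; apply: cong_mul.
exact: h.
Qed.

Lemma cong_sum m N (I : Type) (r : seq I) (P : pred I) (F1 F2 : I -> {poly int}) :
  (forall i, P i -> cong m N (F1 i) (F2 i)) ->
  cong m N (\sum_(i <- r | P i) F1 i) (\sum_(i <- r | P i) F2 i).
Proof.
move=> h; apply: (big_ind2 (cong m N)); first exact: cong_refl.
  by move=> *; apply: cong_add.
exact: h.
Qed.

Lemma cong_exp m N p q k : cong m N p q -> cong m N (p ^+ k) (q ^+ k).
Proof.
move=> h; elim: k => [|k ih]; first by rewrite !expr0; apply: cong_refl.
by rewrite !exprS; apply: cong_mul.
Qed.

Lemma cong_eq m N p q : p = q -> cong m N p q.
Proof. by move=> ->; apply: cong_refl. Qed.

Lemma cong_mulX m N a p q : cong m (N - a) p q -> cong m N ('X^a * p) ('X^a * q).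
Proof.
move=> h i iN; rewrite !coefXnM; case: ifP => ia; first by rewrite subrr dvdz0.
by apply: h; lia.
Qed.

Lemma cong_mulXK m N a p q : cong m N ('X^a * p) ('X^a * q) -> cong m (N - a) p q.
Proof.
move=> h i iN; have := h (i + a)%N ltac:(lia).
by rewrite !coefXnM ltnNge leq_addl /= addnK.
Qed.

Lemma cong_X0 m N a p : (N <= a)%N -> cong m N ('X^a * p) 0.
Proof.
move=> le i iN; rewrite coefXnM coef0; have -> : (i < a)%N by lia.
by rewrite subrr dvdz0.
Qed.

Lemma cong_coef m N p q i : cong m N p q -> (i < N)%N -> (m %| p`_i - q`_i)%Z.
Proof. by move=> h; apply: h. Qed.

Lemma cong_double N p q : cong 2 N p q -> cong 4 N (p *+ 2) (q *+ 2).
Proof.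
move=> h i iN; rewrite !coefMn -mulrnBl.
have := h i iN; case/dvdzP => c ->.
by apply/dvdzP; exists c; rewrite -mulr_natr; ring.
Qed.

Lemma cong_half N p q : cong 0 N (p *+ 2) (q *+ 2) -> cong 0 N p q.
Proof.
move=> h i iN; have := h i iN; rewrite !coefMn -mulrnBl !dvd0z => /eqP.
by rewrite -mulr_natr => /eqP; rewrite mulf_eq0 orbF.
Qed.

End Helpers.

Section QB.
Local Open Scope ring_scope.
Variable R : comNzRingType.
Implicit Types (Q x y : R).

Fixpoint qbin Q (m j : nat) : R :=
  match m, j with
  | _, 0%N => 1
  | 0%N, _.+1 => 0
  | m'.+1, j'.+1 => qbin Q m' j'.+1 + Q ^+ (m' - j') * qbin Q m' j'
  end.

Lemma qbin0 Q m : qbin Q m 0 = 1. Proof. by case: m. Qed.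
Lemma qbinS Q m j : qbin Q m.+1 j.+1 = qbin Q m j.+1 + Q ^+ (m - j) * qbin Q m j.
Proof. by []. Qed.

Lemma qbin_gt Q m j : (m < j)%N -> qbin Q m j = 0.
Proof.
elim: m j => [|m ih] [|j] //= lt.
by rewrite !ih ?mulr0 ?addr0 //; lia.
Qed.

Definition Pq Q k : R := \prod_(i < k) (1 - Q ^+ i.+1).

Lemma PqS Q k : Pq Q k.+1 = Pq Q k * (1 - Q ^+ k.+1).
Proof. by rewrite /Pq big_ord_recr. Qed.

Lemma qbin_prod Q m j : (j <= m)%N -> qbin Q m j * Pq Q j * Pq Q (m - j) = Pq Q m.
Proof.
elim: m j => [|m ih] [|j] //= le.
- by rewrite /Pq !big_ord0 !mulr1.
- by rewrite ?qbin0 subn0 /Pq big_ord0 !mul1r.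
have A : qbin Q m j.+1 * Pq Q j.+1 * Pq Q (m - j) = Pq Q m * (1 - Q ^+ (m - j)).
  case: (ltnP j m) => jm.
    have -> : (m - j = (m - j.+1).+1)%N by lia.
    rewrite (PqS Q (m - j.+1)) mulrA ih //; lia.
  have -> : (m - j = 0)%N by lia.
  by rewrite qbin_gt ?expr0 ?subrr ?mulr0 ?mul0r //; lia.
have B : Q ^+ (m - j) * qbin Q m j * Pq Q j.+1 * Pq Q (m - j) =
         Q ^+ (m - j) * Pq Q m * (1 - Q ^+ j.+1).
  rewrite -(ih j) ?PqS; last by lia.
  ring.
have E : Q ^+ (m - j) * Q ^+ j.+1 = Q ^+ m.+1.
  by rewrite -exprD; congr (_ ^+ _); lia.
rewrite subSS mulrDl mulrDl A B PqS.
have -> : Pq Q m * (1 - Q ^+ (m - j)) + Q ^+ (m - j) * Pq Q m * (1 - Q ^+ j.+1)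
   = Pq Q m * (1 - Q ^+ (m - j) * Q ^+ j.+1) by ring.
by rewrite E.
Qed.

Definition T Q x y m j : R := Q ^+ 'C(j, 2) * qbin Q m j * x ^+ j * y ^+ (m - j).

Lemma rothe Q x y m K : (m < K)%N ->
  \prod_(i < m) (y + x * Q ^+ i) = \sum_(j < K) T Q x y m j.
Proof.
elim: m K => [|m ih] [|K] //= lt.
  rewrite big_ord0 big_ord_recl /T /= big1 ?addr0 ?expr0 ?mulr1 //.
  by move=> i _; rewrite /= mulr0 !mul0r.
rewrite big_ord_recr /= (ih K) ?big_ord_recl /=; last by lia.
have h1 : forall j : 'I_K, T Q x y m.+1 (bump 0 j) =
    y * T Q x y m (bump 0 j) + x * Q ^+ m * T Q x y m j.
  move=> j; rewrite /T /bump /= add1n !add0n.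
  have e1 : Q ^+ 'C(j.+1, 2) * qbin Q m j.+1 * x ^+ j.+1 * y ^+ (m.+1 - j.+1) =
            y * (Q ^+ 'C(j.+1, 2) * qbin Q m j.+1 * x ^+ j.+1 * y ^+ (m - j.+1)).
    case: (ltnP j m) => jm.
      have -> : (m.+1 - j.+1 = (m - j.+1).+1)%N by lia.
      by rewrite (exprS y); ring.
    rewrite qbin_gt; [by rewrite !(mulr0, mul0r) | lia].
  have e2 : Q ^+ 'C(j.+1, 2) * (Q ^+ (m - j) * qbin Q m j) * x ^+ j.+1 * y ^+ (m.+1 - j.+1)
        = x * Q ^+ m * (Q ^+ 'C(j, 2) * qbin Q m j * x ^+ j * y ^+ (m - j)).
    case: (leqP j m) => jm.
      have hq : Q ^+ 'C(j.+1, 2) * Q ^+ (m - j) = Q ^+ m * Q ^+ 'C(j, 2).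
        by rewrite -!exprD binS bin1; congr (_ ^+ _); lia.
      transitivity ((Q ^+ 'C(j.+1, 2) * Q ^+ (m - j)) * qbin Q m j * x ^+ j.+1 * y ^+ (m - j)).
        by rewrite subSS; ring.
      by rewrite hq (exprS x); ring.
    rewrite qbin_gt; [by rewrite !(mulr0, mul0r) | lia].
  rewrite -e2 -[y * _]e1; ring.
rewrite (eq_bigr _ (fun j _ => h1 j)) big_split /= -mulr_sumr -mulr_sumr.
have -> : T Q x y m.+1 0 = y * T Q x y m 0.
  by rewrite /T !qbin0 !subn0 exprS; ring.
have hK : T Q x y m K = 0 by rewrite /T qbin_gt ?mulr0 ?mul0r //; lia.
have -> : \sum_(i < K) T Q x y m (bump 0 i) = \sum_(i < K.+1) T Q x y m i - T Q x y m 0.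
  by rewrite big_ord_recl /=; ring.
rewrite big_ord_recr /= hK addr0.
ring.
Qed.

End QB.

Lemma bin2M x : ('C(x, 2) * 2 + x = x * x)%N.
Proof. elim: x => [|x ih] //; rewrite binS bin1 mulnDl; nia. Qed.
Definition E n j := if (n <= j)%N then 'C(j - n + 1, 2) else 'C(n - j, 2).
Lemma expo n j : (j <= 2 * n)%N -> ('C(j, 2) + (n - 1) * (2 * n - j) = 3 * 'C(n, 2) + E n j)%N.
Proof.
move=> le; rewrite /E.
case: n le => [|n] le; first by have -> : j = 0%N by lia.
have h2 := bin2M n.+1; rewrite subn1 /=.
case: ifP => nj.
  have [k [l [-> e]]] : exists k l, j = (n.+1 + k)%N /\ n.+1 = (k + l)%N.
    by exists (j - n.+1)%N, (n.+1 - (j - n.+1))%N; lia.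
  have -> : (n.+1 + k - n.+1 + 1 = k + 1)%N by lia.
  have -> : (2 * n.+1 - (n.+1 + k) = l)%N by lia.
  have h1 := bin2M (n.+1 + k); have h3 := bin2M (k + 1).
  nia.
have [k ->] : exists k, n = (j + k)%N by exists (n - j); lia.
have -> : ((j + k).+1 - j = k.+1)%N by lia.
have -> : (2 * (j + k).+1 - j = j + 2 * k + 2)%N by lia.
have h1 := bin2M j; have h3 := bin2M k.+1; have h4 := bin2M (j + k).+1.
nia.
Qed.

Section Cauchy.
Local Open Scope ring_scope.
Variable R : comNzRingType.
Implicit Types (Q u w : R).

Definition Cp u w Q n : R := \prod_(i < n) ((w + u * Q ^+ i.+1) * (u + w * Q ^+ i)).

Lemma cauchy u w Q n : Q ^+ (3 * 'C(n, 2)) * Cp u w Q n =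
  Q ^+ (3 * 'C(n, 2)) * \sum_(j < (2 * n)%N.+1) Q ^+ E n j * qbin Q (2 * n)%N j * u ^+ j * w ^+ (2 * n - j).
Proof.
case: n => [|n].
  by rewrite /Cp big_ord0 big_ord1 /E /= !expr0 !mulr1.
set y := w * Q ^+ n.
have R1 := rothe Q u y (ltnSn (2 * n.+1)%N%N).
have R2 : \sum_(j < (2 * n.+1)%N.+1) T Q u y (2 * n.+1)%N j =
   Q ^+ (3 * 'C(n.+1, 2)) * \sum_(j < (2 * n.+1)%N.+1) Q ^+ E n.+1 j * qbin Q (2 * n.+1)%N j * u ^+ j * w ^+ (2 * n.+1 - j)%N.
  rewrite mulr_sumr; apply: eq_bigr => j _.
  have hj : (j <= 2 * n.+1)%N by have := ltn_ord j; lia.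
  rewrite /T /y exprMn -exprM.
  have ex : ('C(j, 2) + n * (2 * n.+1 - j) = 3 * 'C(n.+1, 2) + E n.+1 j)%N.
    by have := expo hj; rewrite subn1.
  transitivity (Q ^+ ('C(j, 2) + n * (2 * n.+1 - j)%N) * qbin Q (2 * n.+1)%N j * u ^+ j * w ^+ (2 * n.+1 - j)%N).
    by rewrite exprD; ring.
  by rewrite ex exprD; ring.
have L1 : \prod_(i < 2 * n.+1) (y + u * Q ^+ i) =
   (\prod_(i < n.+1) (y + u * Q ^+ i)) * \prod_(i < n.+1) (y + u * Q ^+ (n.+1 + i)).
  have -> : (2 * n.+1 = n.+1 + n.+1)%N by lia.
  by rewrite big_split_ord.
have L2 : \prod_(i < n.+1) (y + u * Q ^+ (n.+1 + i)) =
    Q ^+ (n * n.+1) * \prod_(i < n.+1) (w + u * Q ^+ i.+1).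
  have -> : Q ^+ (n * n.+1) = \prod_(i < n.+1) Q ^+ n by rewrite prodr_const card_ord -exprM.
  rewrite -big_split /=.
  apply: eq_bigr => i _; rewrite /y.
  have -> : (n.+1 + i = n + i.+1)%N by lia.
  by rewrite exprD; ring.
have L3 : \prod_(i < n.+1) (y + u * Q ^+ i) =
    Q ^+ 'C(n.+1, 2) * \prod_(i < n.+1) (u + w * Q ^+ i).
  rewrite (reindex_inj rev_ord_inj) /=.
  have -> : 'C(n.+1, 2) = (\sum_(i < n.+1) (n.+1 - i.+1))%N.
    by rewrite -bin2_sum big_rev_mkord subn0.
  rewrite -prodrXr -big_split /=.
  apply: eq_bigr => i _; rewrite /y.
  have -> : Q ^+ n = Q ^+ (n.+1 - i.+1) * Q ^+ i.
    by rewrite -exprD; congr (_ ^+ _); have := ltn_ord i; lia.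
  ring.
rewrite -R2 -R1 L1 L2 L3 /Cp big_split /=.
have -> : (3 * 'C(n.+1, 2) = 'C(n.+1, 2) + n * n.+1)%N.
  by have := bin2M n.+1; lia.
rewrite exprD; ring.
Qed.

End Cauchy.

Section Lim.
Local Open Scope ring_scope.

Definition Fp (e L : nat) : {poly int} := \prod_(i < L) (1 - 'X^(e * i.+1)).
Definition Hp (e L K : nat) : {poly int} := \prod_(i < L) \sum_(j < K) 'X^(e * i.+1 * j).

Lemma PqX e L : Pq ('X^e : {poly int}) L = Fp e L.
Proof. by apply: eq_bigr => i _; rewrite -exprM. Qed.

Lemma FpS e L : Fp e L.+1 = Fp e L * (1 - 'X^(e * L.+1)).
Proof. by rewrite /Fp big_ord_recr. Qed.

Lemma cong_1X m N a : (N <= a)%N -> cong m N (1 - 'X^a) 1.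
Proof.
move=> le; apply: (@cong_trans _ _ _ (1 - 0)); last by rewrite subr0; apply: cong_refl.
apply: cong_sub; first exact: cong_refl.
by rewrite -(mulr1 'X^a); apply: cong_X0.
Qed.

Lemma Fp_stab_le e L L' N : (N <= e * L.+1)%N -> (L <= L')%N ->
  cong 0 N (Fp e L) (Fp e L').
Proof.
move=> hN; elim: L' => [|L' ih] le.
  have -> : L = 0%N by lia.
  exact: cong_refl.
case: (ltnP L L'.+1) => lt; last first.
  have -> : L = L'.+1 by lia.
  exact: cong_refl.
rewrite FpS -(mulr1 (Fp e L)); apply: cong_mul; first by apply: ih; lia.
by apply: cong_sym; apply: cong_1X; nia.
Qed.

Lemma Fp_stab e L L' N : (N <= e * L.+1)%N -> (N <= e * L'.+1)%N ->
  cong 0 N (Fp e L) (Fp e L').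
Proof.
move=> h1 h2; case: (leqP L L') => le; first exact: Fp_stab_le.
by apply: cong_sym; apply: Fp_stab_le => //; lia.
Qed.

Lemma geom s K : (1 - 'X^s) * \sum_(j < K) 'X^(s * j) = 1 - 'X^(s * K) :> {poly int}.
Proof.
elim: K => [|K ih]; first by rewrite big_ord0 muln0 expr0 mulr0 subrr.
rewrite big_ord_recr /= mulrDr ih mulnS exprD.
ring.
Qed.

Lemma FH e L K N : (0 < e)%N -> (N <= K)%N -> cong 0 N (Fp e L * Hp e L K) 1.
Proof.
move=> e0 NK; rewrite /Fp /Hp -big_split /=.
apply: (@cong_trans _ _ _ (\prod_(i < L) (1 : {poly int}))); last first.
  by rewrite big1_eq; apply: cong_refl.
apply: cong_prod => i _; rewrite geom; apply: cong_1X.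
have := ltn_ord i; nia.
Qed.

Lemma inv_ex e L N : (0 < e)%N -> exists H, cong 0 N (Fp e L * H) 1.
Proof. by move=> e0; exists (Hp e L N); apply: FH. Qed.

Lemma qbin_lim e m j L : (0 < e)%N -> (j <= m)%N -> (minn j (m - j) <= L)%N ->
  cong 0 (e * (minn j (m - j)).+1) (qbin ('X^e : {poly int}) m j * Fp e L) 1.
Proof.
move=> e0 jm sL; set M := (e * _)%N.
have [H hH] := inv_ex L M e0.
have hp := qbin_prod ('X^e : {poly int}) jm; rewrite !PqX in hp.
have s1 : cong 0 M (Fp e j) (Fp e L) by apply: Fp_stab; rewrite /M; nia.
have s2 : cong 0 M (Fp e (m - j)) (Fp e L) by apply: Fp_stab; rewrite /M; nia.
have s3 : cong 0 M (Fp e m) (Fp e L) by apply: Fp_stab; rewrite /M; nia.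
set q := qbin _ m j.
have k1 : cong 0 M (q * Fp e L * Fp e L) (Fp e L).
  apply: cong_trans s3; rewrite -hp.
  by apply: cong_sym; apply: cong_mul; [apply: cong_mul; [apply: cong_refl|]|].
apply: (@cong_trans _ _ _ (q * Fp e L * (Fp e L * H))).
  rewrite -{1}(mulr1 (q * Fp e L)); apply: cong_mul; first exact: cong_refl.
  exact: cong_sym.
rewrite mulrA; apply: (@cong_trans _ _ _ (Fp e L * H)) => //.
by apply: cong_mul => //; apply: cong_refl.
Qed.

Lemma Xn_neq0 k : ('X^k : {poly int}) != 0.
Proof. by apply: expf_neq0; rewrite polyX_eq0. Qed.

Lemma jtp_lim e a b (cu cw : int) n N :
  (0 < e)%N ->
  (forall j, (j <= 2 * n)%N ->
     (N <= e * (E n j + minn j (2 * n - j) + 1) + a * j + b * (2 * n - j))%N) ->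
  cong 0 N (Cp (cu%:P * 'X^a) (cw%:P * 'X^b) ('X^e) n * Fp e n)
    (\sum_(j < (2 * n).+1) ('X^e) ^+ E n j * (cu%:P * 'X^a) ^+ j * (cw%:P * 'X^b) ^+ (2 * n - j)).
Proof.
move=> e0 hyp.
have hc := cauchy (cu%:P * 'X^a) (cw%:P * 'X^b) ('X^e : {poly int}) n.
move/mulfI: hc => /(_ (expf_neq0 _ (Xn_neq0 e))) ->.
rewrite mulr_suml; apply: cong_sum => j _.
have hj : (j <= 2 * n)%N by have := ltn_ord j; lia.
set k := (2 * n - j)%N.
set c := (cu ^+ j * cw ^+ k)%:P.
set z := (e * E n j + a * j + b * k)%N.
have -> : ('X^e) ^+ E n j * qbin ('X^e) (2 * n) j * (cu%:P * 'X^a) ^+ j * (cw%:P * 'X^b) ^+ k * Fp e n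
   = 'X^z * (c * (qbin ('X^e) (2 * n) j * Fp e n)).
  rewrite /z /c !exprMn -!exprM !exprD rmorphM /= !rmorphXn /=; ring.
have -> : ('X^e) ^+ E n j * (cu%:P * 'X^a) ^+ j * (cw%:P * 'X^b) ^+ k
   = 'X^z * (c * 1).
  rewrite /z /c !exprMn -!exprM !exprD rmorphM /= !rmorphXn /=; ring.
apply: cong_mulX; apply: cong_mul; first exact: cong_refl.
apply: (@cong_le _ (e * (minn j (2 * n - j)).+1)).
  have := hyp j hj; rewrite /z /k; nia.
apply: qbin_lim => //; lia.
Qed.

End Lim.

Lemma E_ge n j : (j <= 2 * n)%N -> (n <= E n j + minn j (2 * n - j) + 1)%N.
Proof.
move=> le; rewrite /E; case: ifP => nj.
  have := bin2M (j - n + 1); nia.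
have := bin2M (n - j); nia.
Qed.

Section Spec.
Local Open Scope ring_scope.

Lemma cong_cancel m N k s (p q : {poly int}) :
  cong m N ((-1) ^+ s * 'X^k * p) ((-1) ^+ s * 'X^k * q) -> cong m (N - k) p q.
Proof.
move=> h; apply: cong_mulXK.
have h2 := cong_mul (@cong_refl m N ((-1) ^+ s)) h.
have e : forall r : {poly int}, (-1) ^+ s * ((-1) ^+ s * 'X^k * r) = 'X^k * r.
  by move=> r; rewrite mulrA mulrA -exprD addnn -mul2n exprM sqrrN !expr1n mul1r.
by rewrite !e in h2.
Qed.

Lemma Fp_split2 e n : Fp e (2 * n) = (\prod_(i < n) (1 - 'X^(e * (2 * i).+1))) * Fp (2 * e) n.
Proof.
elim: n => [|n ih]; first by rewrite muln0 /Fp !big_ord0 mulr1.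
have -> : (2 * n.+1 = (2 * n).+1.+1)%N by lia.
rewrite !FpS ih big_ord_recr /=.
have -> : (e * (2 * n).+2 = 2 * e * n.+1)%N by lia.
ring.
Qed.

Lemma Fp_split3 e n : Fp e (3 * n) =
  (\prod_(i < n) ((1 - 'X^(e * (3 * i).+1)) * (1 - 'X^(e * (3 * i).+2)))) * Fp (3 * e) n.
Proof.
elim: n => [|n ih]; first by rewrite muln0 /Fp !big_ord0 mulr1.
have -> : (3 * n.+1 = (3 * n).+1.+1.+1)%N by lia.
rewrite !FpS ih big_ord_recr /=.
have -> : (e * (3 * n).+3 = 3 * e * n.+1)%N by lia.
ring.
Qed.

Definition sq n j := if (n <= j)%N then ((j - n) ^ 2)%N else ((n - j) ^ 2)%N.
Definition TH n : {poly int} := \sum_(j < (2 * n).+1) (-1) ^+ (j + n) * 'X^(sq n j).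

Lemma gauss n N : (N <= n)%N ->
  cong 0 N (Fp 1 (2 * n) ^+ 2) (Fp 2 n * TH n).
Proof.
move=> Nn.
have h := @jtp_lim 2 0 1 (-1) 1 n (N + n) isT.
have hyp : forall j, (j <= 2 * n)%N ->
   (N + n <= 2 * (E n j + minn j (2 * n - j) + 1) + 0 * j + 1 * (2 * n - j))%N.
  by move=> j hj; have := E_ge hj; lia.
move/(_ hyp): h.
set O := \prod_(i < n) (1 - 'X^(1 * (2 * i).+1)) : {poly int}.
have hC : Cp ((-1)%:P * 'X^0) (1%:P * 'X^1) ('X^2) n = (-1) ^+ n * 'X^n * O ^+ 2.
  rewrite /Cp /O -prodrXl.
  have -> : (-1) ^+ n * 'X^n = \prod_(i < n) (- 'X : {poly int}).
    by rewrite prodr_const card_ord -[- 'X]mulN1r exprMn.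
  rewrite -big_split /=; apply: eq_bigr => i _.
  rewrite !expr0 !mulr1 mul1r -!exprM mul1n expr1.
  have e1 : ('X^(2 * i.+1)%N : {poly int}) = 'X * 'X^((2 * i).+1)%N.
    by rewrite -exprS; congr (_ ^+ _); lia.
  have e2 : ('X * 'X^(2 * i)%N : {poly int}) = 'X^((2 * i).+1)%N by rewrite -exprS.
  rewrite e1 e2 polyCN polyC1; ring.
have hS : \sum_(j < (2 * n).+1) ('X^2) ^+ E n j * ((-1)%:P * 'X^0) ^+ j * (1%:P * 'X^1) ^+ (2 * n - j)
    = (-1) ^+ n * 'X^n * TH n.
  rewrite /TH mulr_sumr; apply: eq_bigr => j _.
  have hj : (j <= 2 * n)%N by have := ltn_ord j; lia.
  rewrite polyCN polyC1 !expr0 !mulr1 mul1r expr1 -!exprM.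
  have ex : (2 * E n j + (2 * n - j) = n + sq n j)%N.
    rewrite /E /sq; case: ifP => nj.
      have := bin2M (j - n + 1); nia.
    have := bin2M (n - j); nia.
  have sg : (-1) ^+ j = (-1) ^+ n * (-1) ^+ (j + n) :> {poly int}.
    rewrite -exprD (_ : (n + (j + n) = j + 2 * n)%N); last by lia.
    by rewrite exprD exprM sqrrN !expr1n mulr1.
  rewrite sg.
  transitivity ((-1) ^+ n * (-1) ^+ (j + n) * 'X^(2 * E n j + (2 * n - j)) : {poly int}).
    by rewrite (exprD 'X); ring.
  by rewrite ex (exprD 'X); ring.
rewrite hC hS.
have -> : (-1) ^+ n * 'X^n * O ^+ 2 * Fp 2 n = (-1) ^+ n * 'X^n * (O ^+ 2 * Fp 2 n) by ring.
move/cong_cancel; rewrite addnK => h.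
have -> : Fp 1 (2 * n) ^+ 2 = (O ^+ 2 * Fp 2 n) * Fp 2 n.
  by rewrite Fp_split2 /O muln1; ring.
rewrite mulrC; apply: cong_mul => //; exact: cong_refl.
Qed.

End Spec.

Section Spec2.
Local Open Scope ring_scope.

Definition D8 L : {poly int} := \prod_(i < L) (1 + 'X^(8 * i.+1)).
Definition Psi8 L : {poly int} := \sum_(i < L) 'X^(8 * 'C(i.+1, 2)).

Lemma sumE8 n : \sum_(j < (2 * n).+1) 'X^(8 * E n j) = Psi8 n *+ 2 + 'X^(8 * 'C(n.+1, 2)) :> {poly int}.
Proof.
have -> : ((2 * n).+1 = n + n.+1)%N by lia.
rewrite big_split_ord /= big_ord_recr /= -/(Psi8 n).
have -> : \sum_(i < n) 'X^(8 * E n (n + i)) = Psi8 n :> {poly int}.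
  by apply: eq_bigr => i _; rewrite /E leq_addr /=; congr ('X^(8 * 'C(_, 2))); lia.
have -> : \sum_(i < n) 'X^(8 * E n i) = Psi8 n :> {poly int}.
  rewrite (reindex_inj rev_ord_inj) /=; apply: eq_bigr => i _.
  rewrite /E; have := ltn_ord i => lt.
  have -> : (n <= n - i.+1)%N = false by lia.
  by congr ('X^(8 * 'C(_, 2))); lia.
have -> : E n (n + n) = 'C(n.+1, 2) by rewrite /E leq_addr; congr 'C(_, 2); lia.
by rewrite mulr2n addrA.
Qed.

Lemma psi n N : (N <= n)%N -> (0 < n)%N -> cong 0 N (Psi8 n) (D8 n * D8 n.-1 * Fp 8 n).
Proof.
move=> Nn n0.
have h := @jtp_lim 8 0 0 1 1 n N isT.
have hyp : forall j, (j <= 2 * n)%N ->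
   (N <= 8 * (E n j + minn j (2 * n - j) + 1) + 0 * j + 0 * (2 * n - j))%N.
  by move=> j hj; have := E_ge hj; lia.
move/(_ hyp): h.
have hC : Cp (1%:P * 'X^0) (1%:P * 'X^0) ('X^8) n = D8 n * D8 n.-1 *+ 2.
  case: n Nn n0 hyp => [//|n] _ _ _.
  rewrite /Cp (eq_bigr (fun i : 'I_n.+1 => (1 + 'X^(8 * i.+1)) * (1 + 'X^(8 * i)))); last first.
    by move=> i _; rewrite polyC1 !expr0 !mulr1 !mul1r -!exprM.
  rewrite big_split /= [X in _ * X]big_ord_recl /= muln0 expr0 /D8.
  have -> : (1 + 1 = 2%:R :> {poly int}) by [].
  rewrite (eq_bigr (fun i : 'I_n => 1 + 'X^(8 * i.+1))) //.
  by rewrite mulr_natl mulrnAr.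
have hS : \sum_(j < (2 * n).+1) ('X^8) ^+ E n j * (1%:P * 'X^0) ^+ j * (1%:P * 'X^0) ^+ (2 * n - j)
    = Psi8 n *+ 2 + 'X^(8 * 'C(n.+1, 2)) :> {poly int}.
  rewrite -sumE8; apply: eq_bigr => j _.
  by rewrite polyC1 expr0 mulr1 !expr1n !mulr1 exprM.
rewrite hC hS => h.
apply: cong_sym; apply: cong_half.
apply: (cong_trans (q := Psi8 n *+ 2 + 'X^(8 * 'C(n.+1, 2)))).
  by rewrite -mulrnAl; exact: h.
rewrite -{2}(addr0 (Psi8 n *+ 2)); apply: cong_add; first exact: cong_refl.
rewrite -(mulr1 'X^_); apply: cong_X0.
have := bin2M n.+1; nia.
Qed.

Definition pent n j := (3 * E n j + (2 * n - j) - n)%N.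
Definition PE n (e : nat) : {poly int} := \sum_(j < (2 * n).+1) (-1) ^+ (j + n) * 'X^(e * pent n j).

Lemma euler e n N : (0 < e)%N -> (N <= n)%N -> cong 0 N (Fp e (3 * n)) (PE n e).
Proof.
move=> e0 Nn.
have h := @jtp_lim (3 * e) 0 e (-1) 1 n (N + e * n) ltac:(lia).
have hyp : forall j, (j <= 2 * n)%N ->
   (N + e * n <= 3 * e * (E n j + minn j (2 * n - j) + 1) + 0 * j + e * (2 * n - j))%N.
  by move=> j hj; have := E_ge hj; nia.
move/(_ hyp): h.
set O := \prod_(i < n) ((1 - 'X^(e * (3 * i).+1)) * (1 - 'X^(e * (3 * i).+2))) : {poly int}.
have hC : Cp ((-1)%:P * 'X^0) (1%:P * 'X^e) ('X^(3 * e)) n = (-1) ^+ n * 'X^(e * n) * O.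
  rewrite /Cp /O.
  have -> : (-1) ^+ n * 'X^(e * n) = \prod_(i < n) (- 'X^e : {poly int}).
    by rewrite prodr_const card_ord -['X^e]mul1r -mulNr exprMn exprM.
  rewrite -big_split /=; apply: eq_bigr => i _.
  rewrite !expr0 !mulr1 polyCN polyC1 !mul1r -!exprM.
  have e1 : ('X^(3 * e * i.+1)%N : {poly int}) = 'X^e * 'X^(e * (3 * i).+2)%N.
    by rewrite -exprD; congr (_ ^+ _); lia.
  have e2 : ('X^e * 'X^(3 * e * i)%N : {poly int}) = 'X^(e * (3 * i).+1)%N.
    by rewrite -exprD; congr (_ ^+ _); lia.
  rewrite e1 e2; ring.
have hS : \sum_(j < (2 * n).+1) ('X^(3 * e)) ^+ E n j * ((-1)%:P * 'X^0) ^+ j * (1%:P * 'X^e) ^+ (2 * n - j)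
    = (-1) ^+ n * 'X^(e * n) * PE n e.
  rewrite /PE mulr_sumr; apply: eq_bigr => j _.
  have hj : (j <= 2 * n)%N by have := ltn_ord j; lia.
  rewrite polyCN polyC1 !expr0 !mulr1 !mul1r -!exprM.
  have ex : (3 * e * E n j + e * (2 * n - j) = e * n + e * pent n j)%N.
    rewrite /pent /E; case: ifP => nj.
      have := bin2M (j - n + 1); nia.
    have := bin2M (n - j); nia.
  have sg : (-1) ^+ j = (-1) ^+ n * (-1) ^+ (j + n) :> {poly int}.
    rewrite -exprD (_ : (n + (j + n) = j + 2 * n)%N); last by lia.
    by rewrite exprD exprM sqrrN !expr1n mulr1.
  rewrite sg.
  transitivity ((-1) ^+ n * (-1) ^+ (j + n) * 'X^(3 * e * E n j + e * (2 * n - j)) : {poly int}).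
    by rewrite (exprD 'X); ring.
  by rewrite ex (exprD 'X); ring.
rewrite hC hS.
have -> : (-1) ^+ n * 'X^(e * n) * O * Fp (3 * e) n = (-1) ^+ n * 'X^(e * n) * (O * Fp (3 * e) n) by ring.
move/cong_cancel; rewrite addnK => h.
by rewrite Fp_split3.
Qed.

End Spec2.

Section F1.
Local Open Scope ring_scope.

Lemma cong_addm m N (q r : {poly int}) : cong m N (q + m%:P * r) q.
Proof.
move=> i _; rewrite coefD coefCM (addrC q`_i) addrK.
by apply: dvdz_mulr; apply: dvdzz.
Qed.

Lemma cong_add4 N (q r : {poly int}) : cong 4 N (q + r *+ 4) q.
Proof.
move=> i _; rewrite coefD coefMn (addrC q`_i) addrK.
by apply/dvdzP; exists r`_i; rewrite mulr_natr.
Qed.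

Lemma cong_add2 N (q r : {poly int}) : cong 2 N (q + r *+ 2) q.
Proof.
move=> i _; rewrite coefD coefMn (addrC q`_i) addrK.
by apply/dvdzP; exists r`_i; rewrite mulr_natr.
Qed.

Lemma sgn_eq a b c : (a + b = 2 * c)%N -> (-1) ^+ a = (-1) ^+ b :> {poly int}.
Proof.
move=> h.
have e1 : (-1) ^+ b * (-1) ^+ b = 1 :> {poly int}.
  by rewrite -exprD addnn -mul2n exprM sqrrN !expr1n.
have e2 : (-1) ^+ a * (-1) ^+ b = 1 :> {poly int}.
  by rewrite -exprD h exprM sqrrN !expr1n.
have -> : (-1) ^+ a = (-1) ^+ a * ((-1) ^+ b * (-1) ^+ b) :> {poly int} by rewrite e1 mulr1.
by rewrite mulrA e2 mul1r.
Qed.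

Lemma cong_sgn2 N s (p : {poly int}) : cong 4 N (((-1) ^+ s * p) *+ 2) (p *+ 2).
Proof.
rewrite -signr_odd; case: (odd s); last by rewrite expr0 mul1r; apply: cong_refl.
rewrite expr1 mulN1r.
have -> : (- p) *+ 2 = p *+ 2 + (- p) *+ 4 by ring.
exact: cong_add4.
Qed.

Lemma sum_evod (g : nat -> {poly int}) M :
  \sum_(k < 2 * M) g k = \sum_(i < M) g (2 * i)%N + \sum_(i < M) g (2 * i).+1.
Proof.
elim: M => [|M ih]; first by rewrite muln0 !big_ord0 addr0.
have -> : (2 * M.+1 = (2 * M).+1.+1)%N by lia.
rewrite !big_ord_recr /= ih.
ring.
Qed.

Definition evenp (p : {poly int}) := forall i, odd i -> p`_i = 0.

Lemma evenp_add p q : evenp p -> evenp q -> evenp (p + q).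
Proof. by move=> hp hq i oi; rewrite coefD hp ?hq ?addr0. Qed.

Lemma evenp_mul p q : evenp p -> evenp q -> evenp (p * q).
Proof.
move=> hp hq i oi; rewrite coefM big1 // => j _.
have := ltn_ord j => lt.
case oj: (odd j); first by rewrite hp ?mul0r.
rewrite hq ?mulr0 //.
have ji : (j <= i)%N by lia.
by rewrite oddB // oi oj.
Qed.

Lemma evenp1 : evenp 1.
Proof. by move=> [|i] //= _; rewrite coef1. Qed.

Lemma evenpX a : evenp 'X^(2 * a).
Proof.
move=> i oi; rewrite coefXn; case: eqP => // e.
by move: oi; rewrite e oddM.
Qed.

Lemma evenp_sum (I : Type) (r : seq I) (P : pred I) (F : I -> {poly int}) :
  (forall i, P i -> evenp (F i)) -> evenp (\sum_(i <- r | P i) F i).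
Proof.
move=> h; apply: (big_ind evenp) => //; first by move=> i _; rewrite coef0.
exact: evenp_add.
Qed.

Lemma evenp_prod (I : Type) (r : seq I) (P : pred I) (F : I -> {poly int}) :
  (forall i, P i -> evenp (F i)) -> evenp (\prod_(i <- r | P i) F i).
Proof.
move=> h; apply: (big_ind evenp) => //; first exact: evenp1.
exact: evenp_mul.
Qed.

Lemma evenp_exp p k : evenp p -> evenp (p ^+ k).
Proof.
move=> h; elim: k => [|k ih]; first by rewrite expr0; apply: evenp1.
by rewrite exprS; apply: evenp_mul.
Qed.

Lemma evenp_muln p k : evenp p -> evenp (p *+ k).
Proof. by move=> h i oi; rewrite coefMn h // mul0rn. Qed.

Lemma pent_sq n j : (j <= 2 * n)%N -> exists x, (24 * pent n j + 1 = x ^ 2)%N.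
Proof.
move=> hj; rewrite /pent /E; case: ifP => nj.
  have [k jk] : exists k, j = (n + k)%N by exists (j - n)%N; lia.
  subst j; exists (6 * k + 1)%N.
  have -> : (n + k - n + 1 = k + 1)%N by lia.
  have h := bin2M (k + 1); set c := 'C(k + 1, 2) in h *.
  have kc : (k <= 3 * c)%N by nia.
  have -> : (3 * c + (2 * n - (n + k)) - n = 3 * c - k)%N by lia.
  rewrite -mulnn; nia.
have [k nk] : exists k, n = (j + k.+1)%N by exists (n - j)%N.-1; lia.
subst n; exists (6 * k + 5)%N.
have -> : (j + k.+1 - j = k.+1)%N by lia.
have h := bin2M k.+1; set c := 'C(k.+1, 2) in h *.
have -> : (3 * c + (2 * (j + k.+1) - j) - (j + k.+1) = 3 * c + k.+1)%N by lia.
rewrite -mulnn; nia.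
Qed.

End F1.

Section Main.
Local Open Scope ring_scope.

Lemma cong_mul1 m N (x y : {poly int}) : cong m N x 1 -> cong m N (y * x) y.
Proof.
move=> h; rewrite -{2}(mulr1 y); apply: cong_mul => //; exact: cong_refl.
Qed.

Lemma cong_rw m N (p p' q q' : {poly int}) : p = p' -> q = q' -> cong m N p' q' -> cong m N p q.
Proof. by move=> -> ->. Qed.

Lemma cong_exp1 m N (x : {poly int}) k : cong m N x 1 -> cong m N (x ^+ k) 1.
Proof. by move=> h; rewrite -(expr1n _ k); apply: cong_exp. Qed.

Definition Gp t : {poly int} :=
  \prod_(i < t) ((1 - 'X^(2 * i.+1)) ^+ 7 * (\sum_(j < t.+1) 'X^(i.+1 * j)) ^+ (3 * 7 + 1)).

Lemma dE t : d 7 t = (Gp t)`_t.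
Proof. by []. Qed.

Lemma GpE t : Gp t = Fp 2 t ^+ 7 * Hp 1 t t.+1 ^+ 22.
Proof.
rewrite /Gp big_split /= !prodrXl /Fp /Hp.
congr (_ * _ ^+ _); apply: eq_bigr => i _; apply: eq_bigr => j _.
by rewrite mul1n.
Qed.

Lemma l4 (y : {poly int}) : (1 - y) ^+ 4 = (1 - y ^+ 2) ^+ 2 + (- y + y ^+ 2 *+ 2 - y ^+ 3) *+ 4.
Proof. ring. Qed.

Lemma step1_abs m N (a b c dd : {poly int}) : cong 0 N (a * b) 1 -> cong 0 N (c * dd) 1 ->
  cong m N (a ^+ 4) (c ^+ 2) -> cong m N (c ^+ 7 * b ^+ 22) (a ^+ 2 * dd ^+ 5).
Proof.
move=> ab cd a4.
have b4 : cong m N (b ^+ 4) (dd ^+ 2).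
  apply: (@cong_trans _ _ _ (b ^+ 4 * (c * dd) ^+ 2)).
    by apply: cong_sym; apply: cong_mul1; apply: cong0; apply: cong_exp1.
  apply: (@cong_trans _ _ _ (b ^+ 4 * a ^+ 4 * dd ^+ 2)).
    apply: (cong_rw (p' := (b ^+ 4 * dd ^+ 2) * c ^+ 2) (q' := (b ^+ 4 * dd ^+ 2) * a ^+ 4)); [ring|ring|].
    by apply: cong_mul; [apply: cong_refl | apply: cong_sym].
  apply: (cong_rw (p' := dd ^+ 2 * (a * b) ^+ 4) (q' := dd ^+ 2)); [ring|by []|].
  by apply: cong_mul1; apply: cong0; apply: cong_exp1.
apply: (@cong_trans _ _ _ (c ^+ 7 * b ^+ 22 * (a * b) ^+ 2)).
  by apply: cong_sym; apply: cong_mul1; apply: cong0; apply: cong_exp1.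
apply: (@cong_trans _ _ _ (a ^+ 2 * c ^+ 7 * (dd ^+ 2) ^+ 6)).
  apply: (cong_rw (p' := a ^+ 2 * c ^+ 7 * (b ^+ 4) ^+ 6) (q' := a ^+ 2 * c ^+ 7 * (dd ^+ 2) ^+ 6)); [ring|by []|].
  by apply: cong_mul; [apply: cong_refl | apply: cong_exp].
apply: (cong_rw (p' := a ^+ 2 * dd ^+ 5 * (c * dd) ^+ 7) (q' := a ^+ 2 * dd ^+ 5)); [ring|by []|].
by apply: cong_mul1; apply: cong0; apply: cong_exp1.
Qed.

Lemma step1 t : cong 4 t.+1 (Gp t) (Fp 1 t ^+ 2 * Hp 2 t t.+1 ^+ 5).
Proof.
rewrite GpE; apply: step1_abs; try by apply: FH.
rewrite /Fp -!prodrXl; apply: cong_prod => i _.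
have -> : ('X^(2 * i.+1) : {poly int}) = 'X^(1 * i.+1) ^+ 2 by rewrite -exprM; congr (_ ^+ _); lia.
rewrite l4; exact: cong_add4.
Qed.

Lemma step2 t M : (t.+1 <= M)%N ->
  cong 0 t.+1 (Fp 1 t ^+ 2 * Hp 2 t t.+1 ^+ 5) (TH (2 * M) * Hp 2 t t.+1 ^+ 4).
Proof.
move=> NM; set N := t.+1; set dd := Hp 2 t N.
have g := @gauss (2 * M) N ltac:(lia).
have s1 : cong 0 N (Fp 1 t) (Fp 1 (2 * (2 * M))) by apply: Fp_stab; lia.
have s2 : cong 0 N (Fp 2 (2 * M)) (Fp 2 t) by apply: Fp_stab; lia.
have cd : cong 0 N (Fp 2 t * dd) 1 by apply: FH.
apply: (@cong_trans _ _ _ (Fp 2 (2 * M) * TH (2 * M) * dd ^+ 5)).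
  apply: cong_mul; last exact: cong_refl.
  by apply: cong_trans g; apply: cong_exp.
apply: (@cong_trans _ _ _ (Fp 2 t * TH (2 * M) * dd ^+ 5)).
  apply: cong_mul; last exact: cong_refl.
  by apply: cong_mul; last exact: cong_refl.
apply: (cong_rw (p' := TH (2 * M) * dd ^+ 4 * (Fp 2 t * dd)) (q' := TH (2 * M) * dd ^+ 4)).
- by clear; move: (TH _) (Fp 2 t) (Hp 2 t N) => x y z; ring.
- by [].
exact: cong_mul1.
Qed.

End Main.

Section Main3.
Local Open Scope ring_scope.

Lemma TH_split n : TH n = 1 + (\sum_(k < n) (-1) ^+ k.+1 * 'X^(k.+1 ^ 2)) *+ 2.
Proof.
rewrite /TH.
have -> : ((2 * n).+1 = n + n.+1)%N by lia.
rewrite big_split_ord /= big_ord_recl /=.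
have -> : (-1) ^+ (n + 0 + n) * 'X^(sq n (n + 0)) = 1 :> {poly int}.
  rewrite /sq leq_addr addn0 subnn (_ : (0 ^ 2 = 0)%N) // expr0 mulr1 (@sgn_eq _ 0 n) ?expr0 //; lia.
have -> : \sum_(i < n) (-1) ^+ (n + bump 0 i + n) * 'X^(sq n (n + bump 0 i)) =
    \sum_(k < n) (-1) ^+ k.+1 * 'X^(k.+1 ^ 2) :> {poly int}.
  apply: eq_bigr => i _; rewrite /sq /bump /= leq_addr add1n.
  rewrite (@sgn_eq _ i.+1 (n + i.+1)); last by lia.
  by congr (_ * 'X^_); lia.
have -> : \sum_(i < n) (-1) ^+ (i + n) * 'X^(sq n i) =
    \sum_(k < n) (-1) ^+ k.+1 * 'X^(k.+1 ^ 2) :> {poly int}.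
  rewrite (reindex_inj rev_ord_inj) /=; apply: eq_bigr => i _.
  have := ltn_ord i => lt.
  rewrite /sq (_ : (n <= n - i.+1)%N = false); last by lia.
  rewrite (@sgn_eq _ i.+1 n); last by lia.
  by congr (_ * 'X^(_ ^ 2)); lia.
by rewrite mulr2n; ring.
Qed.

Definition EV M : {poly int} := \sum_(i < M) 'X^((2 * i).+2 ^ 2).

Lemma step3 M N : cong 4 N (TH (2 * M)) ((1 + EV M *+ 2) + ('X * Psi8 M) *+ 2).
Proof.
rewrite TH_split -sumrMnl.
apply: (@cong_trans _ _ _ (1 + \sum_(k < 2 * M) ('X^(k.+1 ^ 2) *+ 2))).
  apply: cong_add; first exact: cong_refl.
  apply: cong_sum => k _; exact: cong_sgn2.
apply: cong_eq.
rewrite sumrMnl (sum_evod (fun k => 'X^(k.+1 ^ 2))) /EV /Psi8 mulr_sumr.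
have -> : \sum_(i < M) 'X^((2 * i).+1 ^ 2) = \sum_(i < M) 'X * 'X^(8 * 'C(i.+1, 2)) :> {poly int}.
  apply: eq_bigr => i _; rewrite -exprS; congr ('X^_).
  have := bin2M i.+1; rewrite -mulnn; nia.
have -> : \sum_(i < M) 'X^((2 * i).+1.+1 ^ 2) = \sum_(i < M) 'X^((2 * i).+2 ^ 2) :> {poly int} by [].
rewrite mulrnDl; ring.
Qed.

End Main3.

Section Main4.
Local Open Scope ring_scope.

Lemma l42 (y : {poly int}) : (1 - y) ^+ 4 = (1 - y ^+ 4) + (- y *+ 2 + y ^+ 2 *+ 3 - y ^+ 3 *+ 2 + y ^+ 4) *+ 2.
Proof. ring. Qed.
Lemma l22 (y : {poly int}) : (1 - y) ^+ 2 = (1 - y ^+ 2) + (y ^+ 2 - y) *+ 2.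
Proof. ring. Qed.
Lemma l1p (y : {poly int}) : 1 + y = (1 - y) + y *+ 2.
Proof. ring. Qed.

Lemma D8_F8 N L : cong 2 N (D8 L) (Fp 8 L).
Proof. by apply: cong_prod => i _; rewrite l1p; apply: cong_add2. Qed.

Lemma inv4 m N (c dd f h : {poly int}) : cong 0 N (c * dd) 1 -> cong 0 N (f * h) 1 ->
  cong m N (c ^+ 4) f -> cong m N (dd ^+ 4) h.
Proof.
move=> cd fh c4.
apply: (@cong_trans _ _ _ (dd ^+ 4 * (f * h))).
  by apply: cong_sym; apply: cong_mul1; apply: cong0.
apply: (@cong_trans _ _ _ (dd ^+ 4 * (c ^+ 4 * h))).
  apply: cong_mul; first exact: cong_refl.
  by apply: cong_mul; [apply: cong_sym | apply: cong_refl].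
apply: (cong_rw (p' := h * (c * dd) ^+ 4) (q' := h)); [ring|by []|].
by apply: cong_mul1; apply: cong0; apply: cong_exp1.
Qed.

Lemma step4 t M : (t.+1 <= M)%N -> cong 2 t.+1 (Psi8 M * Hp 2 t t.+1 ^+ 4) (Fp 16 M).
Proof.
move=> NM; set N := t.+1; set F8 := Fp 8 M; set H8 := Hp 8 M N; set dd := Hp 2 t N.
have ps := @psi M N ltac:(lia) ltac:(lia).
have p3 : cong 2 N (Psi8 M) (F8 ^+ 3).
  apply: cong_trans (cong0 _ ps) _.
  rewrite (_ : F8 ^+ 3 = F8 * F8 * F8); last by ring.
  apply: cong_mul; last exact: cong_refl.
  apply: cong_mul; first exact: D8_F8.
  apply: (@cong_trans _ _ _ (Fp 8 M.-1)); first exact: D8_F8.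
  apply: cong0; apply: Fp_stab; lia.
have f8h8 : cong 0 N (F8 * H8) 1 by apply: FH.
have h4 : cong 2 N (dd ^+ 4) H8.
  apply: (@inv4 _ _ (Fp 2 t) _ F8) => //; first by apply: FH.
  apply: (@cong_trans _ _ _ (Fp 8 t)); last by apply: cong0; apply: Fp_stab; lia.
  rewrite /Fp -prodrXl; apply: cong_prod => i _.
  have -> : ('X^(8 * i.+1) : {poly int}) = 'X^(2 * i.+1) ^+ 4 by rewrite -exprM; congr (_ ^+ _); lia.
  by rewrite l42; apply: cong_add2.
apply: (@cong_trans _ _ _ (F8 ^+ 3 * H8)); first by apply: cong_mul.
apply: (@cong_trans _ _ _ (F8 ^+ 2)).
  apply: (cong_rw (p' := F8 ^+ 2 * (F8 * H8)) (q' := F8 ^+ 2)); [ring|by []|].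
  by apply: cong_mul1; apply: cong0.
rewrite /F8 /Fp -prodrXl; apply: cong_prod => i _.
have -> : ('X^(16 * i.+1) : {poly int}) = 'X^(8 * i.+1) ^+ 2 by rewrite -exprM; congr (_ ^+ _); lia.
by rewrite l22; apply: cong_add2.
Qed.

Lemma main m : (forall j, (j <= 2 * (2 * m).+2)%N -> (16 * pent (2 * m).+2 j)%N <> (2 * m)%N) ->
  (4 %| d 7 (2 * m).+1)%Z.
Proof.
move=> hj.
set t := (2 * m).+1; set N := t.+1; set dd := Hp 2 t N.
set A := (1 + EV N *+ 2) * dd ^+ 4.
have key : cong 4 N (Gp t) (A + ('X * PE N 16) *+ 2).
  apply: cong_trans (step1 (t := t)) _.
  apply: cong_trans (cong0 _ (@step2 t N (leqnn _))) _.
  apply: (@cong_trans _ _ _ (((1 + EV N *+ 2) + ('X * Psi8 N) *+ 2) * dd ^+ 4)).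
    by apply: cong_mul; [apply: step3 | apply: cong_refl].
  rewrite mulrDl -/A; apply: cong_add; first exact: cong_refl.
  have -> : ('X * Psi8 N) *+ 2 * dd ^+ 4 = ('X * (Psi8 N * dd ^+ 4)) *+ 2.
    by move: (Psi8 N) (dd ^+ 4) => P D; ring.
  apply: cong_double.
  apply: cong_mul; first exact: cong_refl.
  apply: cong_trans (step4 (leqnn _)) _.
  apply: cong0; apply: cong_trans (@euler 16 N N isT (leqnn N)).
  by apply: Fp_stab; lia.
have evA : evenp A.
  apply: evenp_mul; last apply: evenp_exp.
    apply: evenp_add; first exact: evenp1.
    apply: evenp_muln; apply: evenp_sum => i _.
    rewrite (_ : ((2 * i).+2 ^ 2 = 2 * (2 * i.+1 ^ 2))%N); first exact: evenpX.
    rewrite -!mulnn; nia.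
  apply: evenp_prod => i _; apply: evenp_sum => j _.
  rewrite -mulnA; exact: evenpX.
have := key t (ltnSn t); rewrite -dE coefD coefMn coefXM /=.
rewrite (evA t) ?add0r; last by rewrite /t oddS oddM.
have -> : (PE N 16)`_(2 * m) = 0.
  rewrite /PE coef_sum big1 // => j _.
  have hjj : (j <= 2 * N)%N by have := ltn_ord j; lia.
  have ne := hj j hjj.
  rewrite -signr_odd; case: (odd _); rewrite ?expr1 ?expr0 ?mulN1r ?mul1r ?coefN coefXn;
  by case: eqP => // e; exfalso; apply: ne.
by rewrite mul0rn subr0.
Qed.

End Main4.

Unset Implicit Arguments.

Theorem theorem3p5 (p r : nat) :
  prime p -> (5 <= p)%N -> (1 <= r <= p - 1)%N ->
  ~ (exists x : nat, (x ^ 2 = 3 * r + 1 %[mod p])%N) ->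
  forall n : nat, (4 %| d 7 (2 * p * n + 2 * r + 1))%Z.
Proof.
move=> _ _ _ nres n.
have -> : (2 * p * n + 2 * r + 1 = (2 * (p * n + r)).+1)%N by rewrite -mulnA -mulnDr addn1.
apply: main => j hj e.
apply: nres.
have [x hx] := pent_sq hj.
exists x.
have -> : (x ^ 2 = 3 * n * p + (3 * r + 1))%N by rewrite -hx; nia.
by rewrite modnMDl.
Qed.
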